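(* Let $G=(V,E)$ be a finite simple graph which is $S_{1,1,5}$-free. Let $xy\in E$ and for $i\ge 1$ let $N_i=\{z\in V:\operatorname{dist}_G(z,\{x,y\})=i\}$. Assume $N_2=\{u_1,\dots,u_k\}$ is an independent set, and for each $i$ let $T_i$ be the set of vertices $t\in N_3$ whose only neighbor in $N_2$ is $u_i$. Then there is no induced path $(t_1,t_2,t_3,t_4,t_5)$ in $G[N_3]$ with $t_j\in T_{i_j}$ for five pairwise distinct indices $i_1,\dots,i_5$.
   Context: $S_{1,1,5}$ is the tree with a center $u$ adjacent to $a$, $b$ and $z_1$, where $u,z_1,\dots,z_5$ is an induced path, and no other edges. $\operatorname{dist}_G(z,\{x,y\})$ is the minimum of the distances from $z$ to $x$ and to $y$. *)

(* Defs.v *)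
From mathcomp Require Import all_boot.
Set Implicit Arguments. Unset Strict Implicit. Unset Printing Implicit Defensive.

(* A finite simple graph: vertex set a finType T, adjacency e : rel T,
   assumed symmetric and irreflexive in the theorem. *)

Definition induced_copy (T : finType) (e : rel T) (n : nat)
  (p : rel 'I_n) (f : 'I_n -> T) : Prop :=
  injective f /\ forall i j, e (f i) (f j) = p i j.

(* Pattern S_{1,1,5} on 'I_8: 0 = u (centre), 1 = a, 2 = b, 3..7 = z1..z5;
   edges u-a, u-b, u-z1, z_i - z_{i+1}. *)
Definition S115_edge0 (i j : nat) : bool :=
  [|| (i == 0) && (j == 1), (i == 0) && (j == 2), (i == 0) && (j == 3),
      (i == 3) && (j == 4), (i == 4) && (j == 5), (i == 5) && (j == 6)
    | (i == 6) && (j == 7)].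
Definition S115 : rel 'I_8 :=
  fun i j => S115_edge0 i j || S115_edge0 j i.

Definition S115_free (T : finType) (e : rel T) : Prop :=
  forall f : 'I_8 -> T, ~ induced_copy e S115 f.

Definition P5 : rel 'I_5 := fun i j => (i.+1 == j) || (j.+1 == i).

Definition dist_le (T : finType) (e : rel T) (x y z : T) (k : nat) : Prop :=
  exists a : T, exists p : seq T,
    (a = x \/ a = y) /\ path e a p /\ last a p = z /\ size p <= k.

Definition Nlayer (T : finType) (e : rel T) (x y : T) (i : nat) (z : T) : Prop :=
  dist_le e x y z i /\ ~ dist_le e x y z i.-1.

Definition Tset (T : finType) (e : rel T) (x y u t : T) : Prop :=
  Nlayer e x y 3 t /\
  (forall w, Nlayer e x y 2 w -> e t w -> w = u) /\ e t u.

(* Main.v *)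
Require Import Defs.
From mathcomp Require Import all_boot.
Set Implicit Arguments. Unset Strict Implicit. Unset Printing Implicit Defensive.

Section Aux.
Variables (T : finType) (e : rel T).
Hypotheses (esym : symmetric e) (eirr : irreflexive e).

Lemma dist_step x y z v k : dist_le e x y z k -> e z v -> dist_le e x y v k.+1.
Proof.
case=> a [p [Ha [Hp [Hl Hs]]]] Hzv; exists a, (rcons p v); split=> //.
by rewrite rcons_path Hp Hl Hzv last_rcons size_rcons.
Qed.

Lemma dist_mono x y z k m : dist_le e x y z k -> k <= m -> dist_le e x y z m.
Proof.
case=> a [p [Ha [Hp [Hl Hs]]]] Hkm; exists a, p; do !split=> //.
exact: leq_trans Hs Hkm.
Qed.

Lemma layer_nadj x y i j z v : Nlayer e x y i z -> Nlayer e x y j v ->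
  i.+1 < j -> e z v = false.
Proof.
move=> [Hz _] [_ Hv] Hij; apply/negP=> Hzv; apply: Hv.
apply: (dist_mono (dist_step Hz Hzv)); by case: j Hij.
Qed.

Lemma S115_contra (Hfree : S115_free e) (c a b z1 z2 z3 z4 z5 : T) :
  let s := [:: c; a; b; z1; z2; z3; z4; z5] in
  (forall i j : 'I_8, e (nth c s i) (nth c s j) = S115 i j) -> a != b -> False.
Proof.
move=> s H Hab; apply: (Hfree (fun i => nth c s i)); split=> //.
move=> i j Hij.
have Hk : forall k, S115 i k = S115 j k by move=> k; rewrite -!H Hij.
have Hii : S115 i j = false by rewrite -H Hij eirr.
apply: val_inj.
move: Hij Hk Hii; case: i => [[|[|[|[|[|[|[|[|//]]]]]]]] ?];
  case: j => [[|[|[|[|[|[|[|[|//]]]]]]]] ?] => //= Hij Hk Hii;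
  first [ by move: Hab; rewrite /s /= in Hij; rewrite Hij eqxx
        | by have := Hk (@Ordinal 8 0 isT) | by have := Hk (@Ordinal 8 1 isT)
        | by have := Hk (@Ordinal 8 2 isT) | by have := Hk (@Ordinal 8 3 isT)
        | by have := Hk (@Ordinal 8 4 isT) | by have := Hk (@Ordinal 8 5 isT)
        | by have := Hk (@Ordinal 8 6 isT) | by have := Hk (@Ordinal 8 7 isT) ].
Qed.

End Aux.

Notation o k := (@Ordinal 5 k isT).

Theorem lemma12 (T : finType) (e : rel T)
  (esym : symmetric e) (eirr : irreflexive e)
  (Hfree : S115_free e) (x y : T) (Hxy : e x y)
  (HN2ind : forall v w, Nlayer e x y 2 v -> Nlayer e x y 2 w -> ~~ e v w) :
  ~ exists (t : 'I_5 -> T) (u : 'I_5 -> T),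
      induced_copy e P5 t /\
      injective u /\
      (forall j, Nlayer e x y 2 (u j)) /\
      (forall j, Tset e x y (u j) (t j)).
Proof.
case=> t [u [[_ tt] [uinj [Hu Ht]]]].
have uu : forall i j, e (u i) (u j) = false by move=> i j; apply/negbTE/HN2ind.
have tu : forall i j, e (t i) (u j) = (i == j).
  move=> i j; case: (Ht i) => _ [Huniq Hti].
  case: eqP => [->|Hne]; first by case: (Ht j) => _ [].
  by apply/negP => /(Huniq _ (Hu j)) /uinj Hji; apply: Hne; rewrite Hji.
have [w [r [Hw [Hr [Hrw Hwu]]]]] : exists w r, Nlayer e x y 1 w /\
    dist_le e x y r 0 /\ e r w /\ e w (u (o 0)).
  case: (Hu (o 0)) => [[a [p [Ha [Hp [Hl Hs]]]]] Hn].
  case: p Hp Hl Hs => [|v [|v' [|]]] //= Hp Hl Hs.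
  - by case: Hn; exists a, [::]; do !split=> //.
  - by case: Hn; exists a, [:: v]; do !split=> //.
  - move/and3P: Hp => [Hav Hvu _]; subst v'.
    exists v, a; split; last split; last split => //.
    + split; first by exists a, [:: v]; do !split=> //=; rewrite Hav.
      by move=> H0; apply: Hn; apply: dist_step H0 Hvu.
    + by exists a, [::]; do !split=> //.
have wt : forall i, e w (t i) = false.
  by move=> i; apply: (layer_nadj Hw (proj1 (Ht i))).
have rt : forall i, e r (t i) = false.
  move=> i; apply/negP=> H; case: (Ht i) => [[_ Hn] _]; apply: Hn.
  exact: dist_mono (dist_step Hr H) _.
have ru : forall i, e r (u i) = false.
  move=> i; apply/negP=> H; case: (Hu i) => _ Hn; apply: Hn.
  exact: dist_step Hr H.
case: (boolP (e w (u (o 4)))) => Hw4.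
  apply: (S115_contra eirr Hfree (c:=w) (a:=r) (b:=u (o 4)) (z1:=u (o 0)) (z2:=t (o 0)) (z3:=t (o 1)) (z4:=t (o 2)) (z5:=t (o 3))).
    move=> i j; case: i => [[|[|[|[|[|[|[|[|//]]]]]]]] ?];
    case: j => [[|[|[|[|[|[|[|[|//]]]]]]]] ?]; rewrite /=;
    first [ by rewrite ?tt ?tu ?uu ?wt ?rt ?ru ?Hrw ?eirr ?Hw4 ?Hwu
          | by rewrite esym ?tt ?tu ?uu ?wt ?rt ?ru ?Hrw ?eirr ?Hw4 ?Hwu ].
  by apply/negP => /eqP H; move: (tu (o 4) (o 4)); rewrite -H esym rt.
case: (boolP (e w (u (o 3)))) => Hw3; last first.
  apply: (S115_contra eirr Hfree (c:=t (o 3)) (a:=t (o 4)) (b:=u (o 3)) (z1:=t (o 2)) (z2:=t (o 1)) (z3:=t (o 0)) (z4:=u (o 0)) (z5:=w)).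
    move=> i j; case: i => [[|[|[|[|[|[|[|[|//]]]]]]]] ?];
    case: j => [[|[|[|[|[|[|[|[|//]]]]]]]] ?]; rewrite /=;
    first [ by rewrite ?tt ?tu ?uu ?wt ?rt ?ru ?Hrw ?eirr ?(negbTE Hw4) ?(negbTE Hw3) ?Hwu
          | by rewrite esym ?tt ?tu ?uu ?wt ?rt ?ru ?Hrw ?eirr ?(negbTE Hw4) ?(negbTE Hw3) ?Hwu ].
  by apply/negP => /eqP H; move: (tu (o 4) (o 4)); rewrite H uu.
case: (boolP (e w (u (o 2)))) => Hw2; last first.
  apply: (S115_contra eirr Hfree (c:=t (o 2)) (a:=t (o 3)) (b:=u (o 2)) (z1:=t (o 1)) (z2:=t (o 0)) (z3:=u (o 0)) (z4:=w) (z5:=r)).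
    move=> i j; case: i => [[|[|[|[|[|[|[|[|//]]]]]]]] ?];
    case: j => [[|[|[|[|[|[|[|[|//]]]]]]]] ?]; rewrite /=;
    first [ by rewrite ?tt ?tu ?uu ?wt ?rt ?ru ?Hrw ?eirr ?(negbTE Hw4) ?(negbTE Hw2) ?Hw3 ?Hwu
          | by rewrite esym ?tt ?tu ?uu ?wt ?rt ?ru ?Hrw ?eirr ?(negbTE Hw4) ?(negbTE Hw2) ?Hw3 ?Hwu ].
  by apply/negP => /eqP H; move: (tu (o 3) (o 3)); rewrite H uu.
case: (boolP (e w (u (o 1)))) => Hw1; last first.
  apply: (S115_contra eirr Hfree (c:=t (o 1)) (a:=t (o 0)) (b:=u (o 1)) (z1:=t (o 2)) (z2:=t (o 3)) (z3:=u (o 3)) (z4:=w) (z5:=r)).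
    move=> i j; case: i => [[|[|[|[|[|[|[|[|//]]]]]]]] ?];
    case: j => [[|[|[|[|[|[|[|[|//]]]]]]]] ?]; rewrite /=;
    first [ by rewrite ?tt ?tu ?uu ?wt ?rt ?ru ?Hrw ?eirr ?(negbTE Hw4) ?(negbTE Hw1) ?Hw2 ?Hw3 ?Hwu
          | by rewrite esym ?tt ?tu ?uu ?wt ?rt ?ru ?Hrw ?eirr ?(negbTE Hw4) ?(negbTE Hw1) ?Hw2 ?Hw3 ?Hwu ].
  by apply/negP => /eqP H; move: (tu (o 0) (o 0)); rewrite H uu.
  apply: (S115_contra eirr Hfree (c:=w) (a:=u (o 0)) (b:=u (o 1)) (z1:=u (o 2)) (z2:=t (o 2)) (z3:=t (o 3)) (z4:=t (o 4)) (z5:=u (o 4))).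
    move=> i j; case: i => [[|[|[|[|[|[|[|[|//]]]]]]]] ?];
    case: j => [[|[|[|[|[|[|[|[|//]]]]]]]] ?]; rewrite /=;
    first [ by rewrite ?tt ?tu ?uu ?wt ?rt ?ru ?Hrw ?eirr ?(negbTE Hw4) ?Hw1 ?Hw2 ?Hw3 ?Hwu
          | by rewrite esym ?tt ?tu ?uu ?wt ?rt ?ru ?Hrw ?eirr ?(negbTE Hw4) ?Hw1 ?Hw2 ?Hw3 ?Hwu ].
  by apply/negP => /eqP H; move: (tu (o 0) (o 0)); rewrite H tu.
Qed.
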